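(* Let $P$ be a list of properties of semigroups each of which is preserved under Rees-ideal-commensurability (i.e. if $S_1,S_2$ are Rees-ideal-commensurable then $S_1$ has the property iff $S_2$ does; properties may be negations such as ''not finitely generated''). Then there exists a homogeneous (respectively, multihomogeneous) monoid satisfying every property in $P$ if and only if there exists an $n$-ary homogeneous (respectively, $n$-ary multihomogeneous) monoid, for some $n$, satisfying every property in $P$.
   Context: A monoid is homogeneous / multihomogeneous / $n$-ary homogeneous / $n$-ary multihomogeneous if it admits a finite presentation $\langle A\mid\mathcal{R}\rangle$ with, respectively: $|u|=|v|$ for all $(u,v)\in\mathcal{R}$; $|u|_a=|v|_a$ for all $a\in A$ and $(u,v)\in\mathcal{R}$; $|u|=|v|=n$ for all $(u,v)\in\mathcal{R}$; both of the last two. An ideal $U$ of a semigroup $S$ has finite Rees index if $S\setminus U$ is finite; semigroups $S_1,S_2$ are Rees-ideal-commensurable if there are finite Rees index ideals $U_i\subseteq S_i$ with $U_1\cong U_2$. *)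

(* Defs.v *)
From mathcomp Require Import all_boot.
From Stdlib Require List.
Set Implicit Arguments. Unset Strict Implicit. Unset Printing Implicit Defensive.

Record semigroup := Semigroup {
  sg_car :> Type;
  sg_op : sg_car -> sg_car -> sg_car;
  sg_assoc : forall x y z, sg_op x (sg_op y z) = sg_op (sg_op x y) z }.

Record monoid := Monoid {
  mon_sg :> semigroup;
  mon_one : mon_sg;
  mon_one_l : forall x, sg_op mon_one x = x;
  mon_one_r : forall x, sg_op x mon_one = x }.

Definition is_ideal (S : semigroup) (U : S -> Prop) : Prop :=
  (exists u, U u) /\
  (forall s u, U u -> U (sg_op s u) /\ U (sg_op u s)).

Definition finite_rees_index (S : semigroup) (U : S -> Prop) : Prop :=
  exists l : list S, forall x, ~ U x -> List.In x l.

Definition sub_iso (S1 S2 : semigroup) (U1 : S1 -> Prop) (U2 : S2 -> Prop)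
  (f : S1 -> S2) : Prop :=
  (forall x, U1 x -> U2 (f x)) /\
  (forall x y, U1 x -> U1 y -> f x = f y -> x = y) /\
  (forall z, U2 z -> exists x, U1 x /\ f x = z) /\
  (forall x y, U1 x -> U1 y -> f (sg_op x y) = sg_op (f x) (f y)).

Definition rees_ideal_commensurable (S1 S2 : semigroup) : Prop :=
  exists (U1 : S1 -> Prop) (U2 : S2 -> Prop) (f : S1 -> S2),
    is_ideal U1 /\ finite_rees_index U1 /\
    is_ideal U2 /\ finite_rees_index U2 /\ sub_iso U1 U2 f.

Definition ric_invariant (P : semigroup -> Prop) : Prop :=
  forall S1 S2 : semigroup, rees_ideal_commensurable S1 S2 -> (P S1 <-> P S2).

Inductive cong (A : Type) (R : seq (seq A * seq A)) : seq A -> seq A -> Prop :=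
  | cong_step : forall p q u v, List.In (u, v) R -> cong R (p ++ u ++ q) (p ++ v ++ q)
  | cong_refl : forall w, cong R w w
  | cong_sym : forall w1 w2, cong R w1 w2 -> cong R w2 w1
  | cong_trans : forall w1 w2 w3, cong R w1 w2 -> cong R w2 w3 -> cong R w1 w3.

(** M is (isomorphic to) the monoid presented by <A | R>: there is a surjective
    monoid homomorphism A^* -> M whose kernel is the congruence generated by R. *)
Definition presents (A : finType) (R : seq (seq A * seq A)) (M : monoid) : Prop :=
  exists f : seq A -> M,
    f [::] = mon_one M /\
    (forall u v, f (u ++ v) = sg_op (f u) (f v)) /\
    (forall m : M, exists w, f w = m) /\
    (forall u v, f u = f v <-> cong R u v).

Definition homogeneous (M : monoid) : Prop :=
  exists (A : finType) (R : seq (seq A * seq A)), presents R M /\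
    forall u v, List.In (u, v) R -> size u = size v.

Definition multihomogeneous (M : monoid) : Prop :=
  exists (A : finType) (R : seq (seq A * seq A)), presents R M /\
    forall u v, List.In (u, v) R -> forall a : A, count_mem a u = count_mem a v.

Definition nary_homogeneous (n : nat) (M : monoid) : Prop :=
  exists (A : finType) (R : seq (seq A * seq A)), presents R M /\
    forall u v, List.In (u, v) R -> size u = n /\ size v = n.

Definition nary_multihomogeneous (n : nat) (M : monoid) : Prop :=
  exists (A : finType) (R : seq (seq A * seq A)), presents R M /\
    forall u v, List.In (u, v) R ->
      (size u = n /\ size v = n) /\ (forall a : A, count_mem a u = count_mem a v).

Definition satisfies_all (Ps : list (semigroup -> Prop)) (S : semigroup) : Prop :=
  forall P, List.In P Ps -> P S.

(* Main.v *)
Require Import Defs.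
From mathcomp Require Import all_boot.
From Stdlib Require List.
From Stdlib Require Import ClassicalEpsilon FunctionalExtensionality PropExtensionality.
From mathcomp Require Import zify.

Set Implicit Arguments. Unset Strict Implicit.

Lemma cong_catl (A:Type) (R : seq (seq A * seq A)) u v w :
  cong R u v -> cong R (w ++ u) (w ++ v).
Proof.
elim=> [p q x y H| x| x y _ IH| x y z _ IH1 _ IH2].
- by move: (cong_step (w++p) q H); rewrite -!catA.
- by apply cong_refl.
- by apply cong_sym.
- by apply: cong_trans IH1 IH2.
Qed.

Lemma cong_catr (A:Type) (R : seq (seq A * seq A)) u v w :
  cong R u v -> cong R (u ++ w) (v ++ w).
Proof.
elim=> [p q x y H| x| x y _ IH| x y z _ IH1 _ IH2].
- by move: (cong_step p (q++w) H); rewrite -!catA.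
- by apply cong_refl.
- by apply cong_sym.
- by apply: cong_trans IH1 IH2.
Qed.

Lemma cong_cat (A:Type) (R : seq (seq A * seq A)) u v u' v' :
  cong R u u' -> cong R v v' -> cong R (u ++ v) (u' ++ v').
Proof. move=> h1 h2; apply: cong_trans (cong_catr _ h1) (cong_catl _ h2). Qed.

Lemma cong_inv (A:Type) (R : seq (seq A * seq A)) (g : seq A -> nat) :
  (forall x y, g (x++y) = g x + g y) -> (forall u v, List.In (u,v) R -> g u = g v) ->
  forall u v, cong R u v -> g u = g v.
Proof.
move=> hg hR u v; elim=> [p q x y H| x| x y _ IH| x y z _ IH1 _ IH2].
- by rewrite !hg (hR _ _ H).
- by [].
- by rewrite IH.
- by rewrite IH1 IH2.
Qed.

Definition nf (A : finType) (R : seq (seq A * seq A)) (w : seq A) : seq A :=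
  epsilon (inhabits [::]) (cong R w).

Lemma nf_cong (A : finType) (R : seq (seq A * seq A)) w : cong R w (nf R w).
Proof. rewrite /nf; apply epsilon_spec; exists w; apply cong_refl. Qed.

Lemma nf_eq (A : finType) (R : seq (seq A * seq A)) u v : cong R u v -> nf R u = nf R v.
Proof.
move=> h; rewrite /nf; f_equal; apply functional_extensionality => x.
apply propositional_extensionality; split => H.
- exact: cong_trans (cong_sym h) H.
- exact: cong_trans h H.
Qed.

Lemma nf_idem (A : finType) (R : seq (seq A * seq A)) w : nf R (nf R w) == nf R w.
Proof. apply/eqP; apply nf_eq; apply cong_sym; apply nf_cong. Qed.

Definition Qcar (A : finType) (R : seq (seq A * seq A)) := {w : seq A | nf R w == w}.

Definition qmk (A : finType) (R : seq (seq A * seq A)) (w : seq A) : Qcar R :=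
  exist _ (nf R w) (nf_idem R w).

Definition qop (A : finType) (R : seq (seq A * seq A)) (x y : Qcar R) : Qcar R :=
  qmk R (proj1_sig x ++ proj1_sig y).

Lemma qeq (A : finType) (R : seq (seq A * seq A)) (x y : Qcar R) :
  proj1_sig x = proj1_sig y -> x = y.
Proof.
case: x => x hx; case: y => y hy /= E; subst; f_equal; apply eq_irrelevance.
Qed.

Lemma qnf (A : finType) (R : seq (seq A * seq A)) (x : Qcar R) : nf R (proj1_sig x) = proj1_sig x.
Proof. exact: (eqP (proj2_sig x)). Qed.

Lemma qassoc (A : finType) (R : seq (seq A * seq A)) (x y z : Qcar R) :
  qop x (qop y z) = qop (qop x y) z.
Proof.
apply qeq => /=; apply nf_eq.
apply: cong_trans (cong_catl _ (cong_sym (nf_cong _ _))) _.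
rewrite catA; apply cong_catr; apply nf_cong.
Qed.

Definition Qsg (A : finType) (R : seq (seq A * seq A)) : semigroup :=
  @Defs.Semigroup (Qcar R) (@qop A R) (@qassoc A R).

Lemma qone_l (A : finType) (R : seq (seq A * seq A)) (x : Qsg R) :
  @sg_op (Qsg R) (qmk R [::]) x = x.
Proof.
apply qeq => /=; rewrite -{2}(qnf x); apply nf_eq.
exact: (cong_catr _ (cong_sym (nf_cong R [::]))).
Qed.

Lemma qone_r (A : finType) (R : seq (seq A * seq A)) (x : Qsg R) :
  @sg_op (Qsg R) x (qmk R [::]) = x.
Proof.
apply qeq => /=; rewrite -{2}(qnf x); apply nf_eq.
rewrite -{2}(cats0 (proj1_sig x)).
exact: (cong_catl _ (cong_sym (nf_cong R [::]))).
Qed.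

Definition Qmon (A : finType) (R : seq (seq A * seq A)) : monoid :=
  @Defs.Monoid (Qsg R) (qmk R [::]) (@qone_l A R) (@qone_r A R).

Lemma Qpresents (A : finType) (R : seq (seq A * seq A)) : presents R (Qmon R).
Proof.
exists (qmk R); split; first by [].
split.
  move=> u v; apply qeq => /=; apply nf_eq.
  apply cong_cat; apply nf_cong.
split.
  by move=> m; exists (proj1_sig m); apply qeq => /=; rewrite qnf.
move=> u v; split.
- move=> /(congr1 (@proj1_sig _ _)) /= E.
  apply: cong_trans (nf_cong R u) _; rewrite E; apply cong_sym; apply nf_cong.
- by move=> h; apply qeq => /=; apply nf_eq.
Qed.

Lemma inL (T : eqType) (x : T) (s : seq T) : List.In x s <-> x \in s.
Proof.
elim: s => [|y s IH] //=; rewrite in_cons; split.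
- by case=> [->|/IH ->]; rewrite ?eqxx ?orbT.
- by case/orP => [/eqP ->|/IH]; [left|right].
Qed.

Lemma fin_short (A : finType) (M : Type) (g : seq A -> M) (n : nat) :
  exists l : list M, forall w, size w < n -> List.In (g w) l.
Proof.
exists (List.flat_map (fun k => List.map (fun t : k.-tuple A => g (tval t)) (enum {: k.-tuple A}))
          (List.seq 0 n)).
move=> w hw; apply List.in_flat_map; exists (size w); split.
  apply List.in_seq; lia.
apply List.in_map_iff; exists (@Tuple (size w) A w (eqxx (size w))); split=> //.
by apply/inL; rewrite mem_enum.
Qed.

Lemma ideal_of (A : finType) (M : monoid) (g : seq A -> M) (n : nat) :
  (forall u v, g (u ++ v) = sg_op (g u) (g v)) ->
  (forall m : M, exists w, g w = m) ->
  (forall u v, g u = g v -> size u = size v) ->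
  (exists w0 : seq A, size w0 = n) ->
  is_ideal (fun m : M => exists w, g w = m /\ n <= size w) /\
  finite_rees_index (fun m : M => exists w, g w = m /\ n <= size w).
Proof.
move=> hom surj sz [w0 hw0]; split; first split.
- by exists (g w0); exists w0; rewrite hw0.
- move=> s u [w [<- hw]]; have [ws <-] := surj s; split.
  + exists (ws ++ w); rewrite hom size_cat; split=> //; lia.
  + exists (w ++ ws); rewrite hom size_cat; split=> //; lia.
- have [l hl] := fin_short g n; exists l => x hx.
  have [w hw] := surj x; rewrite -hw; apply hl.
  rewrite ltnNge; apply/negP => h; apply hx; by exists w.
Qed.

Definition decP (P : Prop) : bool := if excluded_middle_informative P then true else false.
Lemma decPP (P : Prop) : decP P = true <-> P.
Proof. by rewrite /decP; case: excluded_middle_informative. Qed.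

Lemma maxb (A : finType) (R : seq (seq A * seq A)) :
  (forall u v, List.In (u,v) R -> size u <= foldr (fun p m => maxn (size p.1) m) 0 R) /\
  (exists w0 : seq A, size w0 = foldr (fun p m => maxn (size p.1) m) 0 R).
Proof.
split.
  elim: R => [|[a b] R IH] //= u v [[<- _]|h].
  - by rewrite leq_maxl.
  - exact: leq_trans (IH _ _ h) (leq_maxr _ _).
elim: R => [|[a b] R [w hw]] /=; first by exists [::].
case: (leqP (size a) (foldr (fun p m => maxn (size p.1) m) 0 R)) => h.
- by exists w; rewrite hw; lia.
- by exists a; lia.
Qed.

Lemma main (A : finType) (R : seq (seq A * seq A)) (M : monoid) :
  presents R M -> (forall u v, List.In (u,v) R -> size u = size v) ->
  exists (n : nat) (R' : seq (seq A * seq A)),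
    (forall u v, List.In (u,v) R' -> (size u = n /\ size v = n) /\ cong R u v) /\
    rees_ideal_commensurable M (Qmon R').
Proof.
case=> phi [_ [hom [surj hcong]]] hsz.
pose n := foldr (fun p m => maxn (size p.1) m) 0 R.
have [hn [w0 hw0]] := maxb R.
have szR : forall u v, cong R u v -> size u = size v.
  apply: cong_inv => //; exact: size_cat.
pose R' := [seq (tval x.1, tval x.2) | x <- enum {: n.-tuple A * n.-tuple A} &
              decP (phi (tval x.1) = phi (tval x.2))].
have R'in : forall u v, size u = n -> size v = n -> phi u = phi v -> List.In (u,v) R'.
  move=> u v hu hv he; apply/inL.
  have tu : size u == n by rewrite hu.
  have tv : size v == n by rewrite hv.
  apply/mapP; exists (Tuple tu, Tuple tv) => //.
  by rewrite mem_filter mem_enum andbT /=; apply/decPP.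
have R'out : forall u v, List.In (u,v) R' -> (size u = n /\ size v = n) /\ phi u = phi v.
  move=> u v /inL /mapP [[t1 t2]]; rewrite mem_filter mem_enum andbT /= => /decPP h [-> ->].
  by rewrite !size_tuple.
have K1 : forall u v, cong R' u v -> phi u = phi v.
  move=> u v; elim=> [p q x y H| x| x y _ IH| x y z _ IH1 _ IH2] //.
  - by rewrite !hom (R'out _ _ H).2.
  - by rewrite IH1.
have K2 : forall u v, cong R u v -> n <= size u -> cong R' u v.
  move=> u v; elim=> [p q x y H| x| x y c IH| x y z c1 IH1 c2 IH2] hs.
  - have hxy := hsz _ _ H; have hxn := hn _ _ H.
    rewrite !size_cat in hs.
    pose a := minn (size p) (n - size x); pose b := n - size x - a.
    have hb : b <= size q by rewrite /b /a; lia.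
    rewrite -(cat_take_drop (size p - a) p) -(cat_take_drop b q).
    set p1 := take _ p; set p2 := drop _ p; set q1 := take b q; set q2 := drop b q.
    have E : forall z, (p1 ++ p2) ++ z ++ (q1 ++ q2) = p1 ++ (p2 ++ z ++ q1) ++ q2.
      by move=> z; rewrite -!catA.
    rewrite !E; apply cong_step; apply R'in.
    + rewrite !size_cat /p2 /q1 size_drop (size_takel hb) /b /a; lia.
    + rewrite !size_cat /p2 /q1 size_drop (size_takel hb) /b /a; lia.
    + apply/hcong; apply cong_step; exact: H.
  - by apply cong_refl.
  - apply cong_sym; apply IH; by rewrite (szR _ _ c).
  - apply: cong_trans (IH1 hs) (IH2 _); by rewrite -(szR _ _ c1).
have [f' [_ [hom' [surj' hcong']]]] := Qpresents R'.
pose pre := fun m : M => epsilon (inhabits [::]) (fun w => phi w = m).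
have pre_spec : forall m, phi (pre m) = m.
  by move=> m; rewrite /pre; apply epsilon_spec; apply surj.
have szR' : forall u v, cong R' u v -> size u = size v.
  apply: cong_inv => //; first exact: size_cat.
  by move=> u v /R'out [[-> ->] _].
exists n, R'; split.
  by move=> u v /R'out [hs he]; split=> //; apply/hcong.
have [I1 F1] := ideal_of hom surj (fun u v h => szR _ _ (proj1 (hcong u v) h)) (ex_intro _ w0 hw0).
have [I2 F2] := ideal_of hom' surj' (fun u v h => szR' _ _ (proj1 (hcong' u v) h))
  (ex_intro _ w0 hw0).
do 3 eexists; split; first exact: I1.
split; first exact: F1.
split; first exact: I2.
split; first exact: F2.
instantiate (1 := fun m => f' (pre m)).
have prel : forall x w, phi w = x -> size (pre x) = size w.
  by move=> x w hw; apply szR; apply/hcong; rewrite pre_spec.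
split; [|split; [|split]].
- move=> x [w [hw hs]]; exists (pre x); split=> //; by rewrite (prel _ _ hw).
- move=> x y _ _ /hcong' /K1; by rewrite !pre_spec.
- move=> z [w [<- hs]]; exists (phi w); split; first by exists w.
  apply/hcong'; apply cong_sym; apply K2 => //; apply/hcong; by rewrite pre_spec.
- move=> x y [w [hw hs]] _; rewrite -hom'; apply/hcong'; apply cong_sym; apply K2.
  + apply/hcong; by rewrite hom !pre_spec.
  + rewrite size_cat (prel _ _ hw); lia.
Qed.

Theorem corollary5p6 (Ps : list (semigroup -> Prop)) :
  (forall P, List.In P Ps -> ric_invariant P) ->
  ((exists M : monoid, homogeneous M /\ satisfies_all Ps M) <->
   (exists (n : nat) (M : monoid), nary_homogeneous n M /\ satisfies_all Ps M)) /\
  ((exists M : monoid, multihomogeneous M /\ satisfies_all Ps M) <->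
   (exists (n : nat) (M : monoid), nary_multihomogeneous n M /\ satisfies_all Ps M)).
Proof.
move=> hinv; split; split.
- case=> M [[A [R [hp hs]]] hsat].
  have [n [R' [hR' hc]]] := main hp hs.
  exists n, (Qmon R'); split.
    exists A, R'; split; first exact: Qpresents.
    by move=> u v /hR' [].
  by move=> P hP; apply (hinv P hP _ _ hc); apply hsat.
- case=> n [M [[A [R [hp hs]]] hsat]]; exists M; split=> //.
  exists A, R; split=> // u v /hs [-> ->] //.
- case=> M [[A [R [hp hs]]] hsat].
  have hsz : forall u v, List.In (u,v) R -> size u = size v.
    move=> u v /hs h; apply: perm_size; apply/allP => x _; apply/eqP; exact: h x.
  have [n [R' [hR' hc]]] := main hp hsz.
  exists n, (Qmon R'); split.
    exists A, R'; split; first exact: Qpresents.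
    move=> u v /hR' [hl hcg]; split=> // a.
    apply: (cong_inv (g := fun w => count_mem a w)) hcg.
    + by move=> x y; rewrite count_cat.
    + by move=> x y /hs.
  by move=> P hP; apply (hinv P hP _ _ hc); apply hsat.
- case=> n [M [[A [R [hp hs]]] hsat]]; exists M; split=> //.
  exists A, R; split=> // u v /hs [] //.
Qed.
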